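(* Let $(X,V,v)$ be a measure space over a prering $V$ with $X\in V$, let $S=S(V)$ and let $N$ be the family of null sets. For $A\subset X$ the following are equivalent: (a) $A\in V_c$; (b) $A=B\triangle D$ for some $B\in S^{\delta\sigma}$ and $D\in N$; (c) $A=B\triangle D$ for some $B\in V^{\sigma\delta}$ and $D\in N$. Here $\triangle$ is symmetric difference, $W^\sigma$ (resp. $W^\delta$) denotes countable unions (resp. countable intersections) of members of $W$, $S^{\delta\sigma}=(S^\delta)^\sigma$ and $V^{\sigma\delta}=(V^\sigma)^\delta$.
   Context: Measure space: $X$ a set, $V$ a prering (i.e. $\emptyset\in V$ and for $A,B\in V$ the sets $A\cap B$, $A\setminus B$ belong to $S(V)$, the family of finite disjoint unions of members of $V$), $v:V\to[0,\infty)$ countably additive. $S(V,\mathbb R)$: simple functions $\sum r_ic_{A_i}$ with $A_i\in V$ pairwise disjoint; $\int h\,dv=\sum r_iv(A_i)$, $\|h\|=\int|h|dv$. Null set: for every $\varepsilon>0$ covered by countably many $A_t\in V$ with $\sum v(A_t)<\varepsilon$. Basic sequence: $s_n=h_1+\dots+h_n$ with simple $h_n$, $\|h_n\|\le M4^{-n}$. $L(v,\mathbb R)$: almost-everywhere limits of basic sequences. $V_c=\{A\subset X: c_A\in L(v,\mathbb R)\}$. *)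

(* Defs.v *)
From Stdlib Require Import Reals Lra List ClassicalEpsilon.
Import ListNotations.
Open Scope R_scope.

Set Implicit Arguments.

Definition set (X : Type) := X -> Prop.

Definition indic {X : Type} (A : set X) (x : X) : R :=
  if excluded_middle_informative (A x) then 1 else 0.

Definition emptyset {X : Type} : set X := fun _ => False.
Definition fullset {X : Type} : set X := fun _ => True.

Definition list_disjoint {X : Type} (l : list (set X)) : Prop :=
  forall i j, (i < length l)%nat -> (j < length l)%nat -> i <> j ->
    forall x, ~ (nth i l emptyset x /\ nth j l emptyset x).

Definition SV {X : Type} (V : set (set X)) (A : set X) : Prop :=
  exists l : list (set X), Forall V l /\ list_disjoint l /\
    (forall x, A x <-> exists B, In B l /\ B x).

Definition prering {X : Type} (V : set (set X)) : Prop :=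
  V emptyset /\
  (forall A B, V A -> V B -> SV V (fun x => A x /\ B x)) /\
  (forall A B, V A -> V B -> SV V (fun x => A x /\ ~ B x)).

(* v : V -> [0, oo) countably additive (values of v off V are irrelevant) *)
Definition count_additive {X : Type} (V : set (set X)) (v : set X -> R) : Prop :=
  (forall A, V A -> 0 <= v A) /\
  (forall (A : set X) (An : nat -> set X),
     V A -> (forall n, V (An n)) ->
     (forall n m, n <> m -> forall x, ~ (An n x /\ An m x)) ->
     (forall x, A x <-> exists n, An n x) ->
     infinite_sum (fun n => v (An n)) (v A)).

Definition measure_space {X : Type} (V : set (set X)) (v : set X -> R) : Prop :=
  prering V /\ count_additive V v.

Definition simple_rep {X : Type} (V : set (set X)) (l : list (R * set X))
    (h : X -> R) : Prop :=
  Forall (fun p => V (snd p)) l /\ list_disjoint (map snd l) /\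
  (forall x, h x = fold_right (fun p acc => fst p * indic (snd p) x + acc) 0 l).

Definition rep_integral {X : Type} (v : set X -> R) (l : list (R * set X)) : R :=
  fold_right (fun p acc => fst p * v (snd p) + acc) 0 l.

(* ||h|| = int |h| dv; for a disjoint representation |h| = sum |r_i| c_{A_i} *)
Definition rep_norm {X : Type} (v : set X -> R) (l : list (R * set X)) : R :=
  rep_integral v (map (fun p => (Rabs (fst p), snd p)) l).

Definition simple_norm_le {X : Type} (V : set (set X)) (v : set X -> R)
    (h : X -> R) (b : R) : Prop :=
  exists l, simple_rep V l h /\ rep_norm v l <= b.

(* basic sequence: s_n = h_1 + ... + h_n, h_n simple, ||h_n|| <= M 4^{-n}.
   Here indexing is shifted: s n = h 0 + ... + h n, ||h n|| <= M 4^{-(n+1)}. *)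
Definition basic_seq {X : Type} (V : set (set X)) (v : set X -> R)
    (s : nat -> X -> R) : Prop :=
  exists (h : nat -> X -> R) (M : R),
    (forall n, simple_norm_le V v (h n) (M * (/ 4) ^ (S n))) /\
    (forall n x, s n x = sum_f_R0 (fun k => h k x) n).

Definition null_set {X : Type} (V : set (set X)) (v : set X -> R) (D : set X) : Prop :=
  forall eps, 0 < eps ->
    exists (At : nat -> set X) (l : R),
      (forall t, V (At t)) /\
      (forall x, D x -> exists t, At t x) /\
      infinite_sum (fun t => v (At t)) l /\ l < eps.

Definition L1 {X : Type} (V : set (set X)) (v : set X -> R) (f : X -> R) : Prop :=
  exists (s : nat -> X -> R) (N : set X),
    basic_seq V v s /\ null_set V v N /\
    (forall x, ~ N x -> Un_cv (fun n => s n x) (f x)).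

Definition Vc {X : Type} (V : set (set X)) (v : set X -> R) (A : set X) : Prop :=
  L1 V v (indic A).

Definition sigma_of {X : Type} (W : set (set X)) (A : set X) : Prop :=
  exists Bn : nat -> set X, (forall n, W (Bn n)) /\ (forall x, A x <-> exists n, Bn n x).

Definition delta_of {X : Type} (W : set (set X)) (A : set X) : Prop :=
  exists Bn : nat -> set X, (forall n, W (Bn n)) /\ (forall x, A x <-> forall n, Bn n x).

Definition symdiff {X : Type} (B D : set X) : set X :=
  fun x => (B x /\ ~ D x) \/ (D x /\ ~ B x).

(* Main.v *)
Require Import Defs.
From Stdlib Require Import Reals Lra Lia List Classical ClassicalEpsilon Cantor.
Import ListNotations.
Open Scope R_scope.

Section P1.
Context {X : Type}.

Definition dsj (A B : set X) : Prop := forall x, ~ (A x /\ B x).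
Definition lunion (l : list (set X)) (x : X) : Prop := exists B, In B l /\ B x.
Definition pd (l : list (set X)) : Prop := ForallOrdPairs dsj l.

Lemma dsj_sym A B : dsj A B -> dsj B A.
Proof. unfold dsj; intros H x [H1 H2]; apply (H x); tauto. Qed.

Lemma list_disjoint_pd l : list_disjoint l <-> pd l.
Proof.
  unfold list_disjoint, pd; split.
  - induction l as [|a l IH]; intros H; constructor.
    + apply Forall_forall; intros b Hb. destruct (In_nth l b emptyset Hb) as [j [Hj Hjb]].
      intros x Hx. apply (H 0%nat (S j) ltac:(simpl;lia) ltac:(simpl;lia) ltac:(lia) x). simpl. subst b; exact Hx.
    + apply IH. intros i j Hi Hj Hij x. apply (H (S i) (S j)); simpl; lia.
  - induction 1 as [|a l Ha Hl IH]; intros i j Hi Hj Hij x; simpl in Hi, Hj.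
    + lia.
    + destruct i as [|i], j as [|j]; simpl.
      * lia.
      * rewrite Forall_forall in Ha. apply (Ha (nth j l emptyset)). apply nth_In; simpl in *; lia.
      * rewrite Forall_forall in Ha. intros [H1 H2]. assert (Hi' : (i < length l)%nat) by (simpl in *; lia).
        apply (Ha (nth i l emptyset) (nth_In _ _ Hi') x). tauto.
      * apply IH; lia.
Qed.

Lemma pd_app l1 l2 : pd l1 -> pd l2 -> (forall a b, In a l1 -> In b l2 -> dsj a b) -> pd (l1 ++ l2).
Proof.
  unfold pd; induction 1 as [|a l Ha Hl IH]; intros H2 H; simpl; auto.
  constructor.
  - apply Forall_app; split; auto. apply Forall_forall; intros b Hb; apply H; simpl; auto.
  - apply IH; auto. intros; apply H; simpl; auto.
Qed.

Lemma lunion_app l1 l2 x : lunion (l1 ++ l2) x <-> lunion l1 x \/ lunion l2 x.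
Proof.
  unfold lunion; split.
  - intros [B [HB Hx]]. apply in_app_or in HB. destruct HB; [left|right]; eauto.
  - intros [[B [HB Hx]]|[B [HB Hx]]]; exists B; split; auto; apply in_or_app; auto.
Qed.

Lemma lunion_cons a l x : lunion (a :: l) x <-> a x \/ lunion l x.
Proof.
  unfold lunion; split.
  - intros [B [[HB|HB] Hx]]; [subst; left; auto | right; eauto].
  - intros [H|[B [HB Hx]]]; [exists a; simpl; auto| exists B; simpl; auto].
Qed.

Lemma pd_cons_dsj a l : pd (a :: l) -> dsj a (lunion l).
Proof.
  intros H. inversion H as [|? ? Ha Hl]; subst. intros x [H1 [B [HB H2]]].
  rewrite Forall_forall in Ha. apply (Ha B HB x); auto.
Qed.
Lemma pd_cons_tail a l : pd (a :: l) -> pd l.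
Proof. intros H; inversion H; auto. Qed.

Variable V : set (set X).
Hypothesis HpV : prering V.
Hypothesis HX : V fullset.

Definition SVl (A : set X) (l : list (set X)) : Prop :=
  Forall V l /\ pd l /\ (forall x, A x <-> lunion l x).

Lemma SV_iff A : SV V A <-> exists l, SVl A l.
Proof.
  unfold SV, SVl; split; intros [l [H1 [H2 H3]]]; exists l; (split; [auto|split; [apply list_disjoint_pd; auto|]]);
    intros x; apply H3.
Qed.

Lemma SV_ext A B : SV V A -> (forall x, B x <-> A x) -> SV V B.
Proof.
  intros H E. apply SV_iff in H. apply SV_iff. destruct H as [l [H1 [H2 H3]]].
  exists l; repeat split; auto; intros; [apply H3, E|apply E, H3]; auto.
Qed.

Lemma SV_V A : V A -> SV V A.
Proof.
  intros H. apply SV_iff. exists [A]. repeat split.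
  - constructor; auto.
  - constructor; constructor.
  - intros Hx; exists A; simpl; auto.
  - intros [B [[HB|[]] Hx]]; subst; auto.
Qed.

Lemma SV_empty : SV V emptyset.
Proof. apply SV_V, HpV. Qed.

Lemma SV_empty' A : (forall x, ~ A x) -> SV V A.
Proof. intros H. apply (SV_ext _ _ SV_empty). intros x; unfold emptyset; split; [apply H|tauto]. Qed.

Lemma SV_dunion A B C : SV V A -> SV V B -> dsj A B -> (forall x, C x <-> A x \/ B x) -> SV V C.
Proof.
  intros HA HB D E. apply SV_iff in HA, HB. destruct HA as [la [Ha1 [Ha2 Ha3]]], HB as [lb [Hb1 [Hb2 Hb3]]].
  apply SV_iff. exists (la ++ lb). repeat split.
  - apply Forall_app; auto.
  - apply pd_app; auto. intros a b Ha Hb x [Hx1 Hx2]. apply (D x); split.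
    + apply Ha3; exists a; auto.
    + apply Hb3; exists b; auto.
  - intros Hx. apply lunion_app. apply E in Hx. rewrite <- Ha3, <- Hb3; auto.
  - intros Hx. apply E. apply lunion_app in Hx. rewrite Ha3, Hb3; auto.
Qed.

Lemma SV_inter_V_l b : V b -> forall la, Forall V la -> pd la -> SV V (fun x => lunion la x /\ b x).
Proof.
  intros Hb; induction la as [|a la IH]; intros H1 H2.
  - apply SV_empty'. intros x [[B [[] _]] _].
  - inversion H1 as [|? ? Hv Hvs]; subst.
    apply (SV_dunion (fun x => a x /\ b x) (fun x => lunion la x /\ b x)).
    + apply HpV; auto.
    + apply IH; auto. eapply pd_cons_tail; eauto.
    + intros x [[H3 _] [H4 _]]. apply (pd_cons_dsj _ _ H2 x); auto.
    + intros x; rewrite lunion_cons; tauto.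
Qed.

Lemma SV_inter_V A b : SV V A -> V b -> SV V (fun x => A x /\ b x).
Proof.
  intros HA Hb. apply SV_iff in HA. destruct HA as [la [H1 [H2 H3]]].
  apply (SV_ext _ _ (SV_inter_V_l b Hb la H1 H2)). intros x; rewrite H3; tauto.
Qed.

Lemma SV_inter_l A : SV V A -> forall lb, Forall V lb -> pd lb -> SV V (fun x => A x /\ lunion lb x).
Proof.
  intros HA; induction lb as [|b lb IH]; intros H1 H2.
  - apply SV_empty'. intros x [_ [B [[] _]]].
  - inversion H1 as [|? ? Hv Hvs]; subst.
    apply (SV_dunion (fun x => A x /\ b x) (fun x => A x /\ lunion lb x)).
    + apply SV_inter_V; auto.
    + apply IH; auto. eapply pd_cons_tail; eauto.
    + intros x [[_ H3] [_ H4]]. apply (pd_cons_dsj _ _ H2 x); auto.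
    + intros x; rewrite lunion_cons; tauto.
Qed.

Lemma SV_inter A B : SV V A -> SV V B -> SV V (fun x => A x /\ B x).
Proof.
  intros HA HB. apply SV_iff in HB. destruct HB as [lb [H1 [H2 H3]]].
  apply (SV_ext _ _ (SV_inter_l A HA lb H1 H2)). intros x; rewrite H3; tauto.
Qed.

Lemma SV_diff_V_l a : V a -> forall lb, Forall V lb -> SV V (fun x => a x /\ ~ lunion lb x).
Proof.
  intros Ha; induction lb as [|b lb IH]; intros H1.
  - apply (SV_ext _ _ (SV_V _ Ha)). intros x; split; [tauto|]. intros; split; auto. intros [B [[] _]].
  - inversion H1 as [|? ? Hv Hvs]; subst.
    apply (SV_ext _ _ (SV_inter _ _ (proj2 (proj2 HpV) a b Ha Hv) (IH Hvs))).
    intros x; rewrite lunion_cons; tauto.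
Qed.

Lemma SV_diff_l B : SV V B -> forall la, Forall V la -> pd la -> SV V (fun x => lunion la x /\ ~ B x).
Proof.
  intros HB. apply SV_iff in HB. destruct HB as [lb [Hb1 [Hb2 Hb3]]].
  induction la as [|a la IH]; intros H1 H2.
  - apply SV_empty'. intros x [[B' [[] _]] _].
  - inversion H1 as [|? ? Hv Hvs]; subst.
    apply (SV_dunion (fun x => a x /\ ~ B x) (fun x => lunion la x /\ ~ B x)).
    + apply (SV_ext _ _ (SV_diff_V_l a Hv lb Hb1)). intros x; rewrite Hb3; tauto.
    + apply IH; auto. eapply pd_cons_tail; eauto.
    + intros x [[H5 _] [H6 _]]. apply (pd_cons_dsj _ _ H2 x); auto.
    + intros x; rewrite lunion_cons; tauto.
Qed.

Lemma SV_diff A B : SV V A -> SV V B -> SV V (fun x => A x /\ ~ B x).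
Proof.
  intros HA HB. apply SV_iff in HA. destruct HA as [la [H1 [H2 H3]]].
  apply (SV_ext _ _ (SV_diff_l B HB la H1 H2)). intros x; rewrite H3; tauto.
Qed.

Lemma SV_union A B : SV V A -> SV V B -> SV V (fun x => A x \/ B x).
Proof.
  intros HA HB. apply (SV_dunion A (fun x => B x /\ ~ A x)); auto.
  - apply SV_diff; auto.
  - intros x; tauto.
  - intros x; tauto.
Qed.

Lemma SV_full : SV V fullset.
Proof. apply SV_V; auto. Qed.

Lemma SV_compl A : SV V A -> SV V (fun x => ~ A x).
Proof.
  intros HA. apply (SV_ext _ _ (SV_diff _ _ SV_full HA)). unfold fullset; tauto.
Qed.

Lemma SV_bool : forall (L : list (set X)), Forall (SV V) L ->
  forall Q : set X, (forall x y, (forall B, In B L -> (B x <-> B y)) -> Q x -> Q y) -> SV V Q.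
Proof.
  induction L as [|B L IH]; intros HL Q HQ.
  - destruct (classic (exists x, Q x)) as [[x Hx]|Hn].
    + apply (SV_ext _ _ SV_full). intros y; unfold fullset; split; auto. intros _.
      apply (HQ x y); auto. intros B [].
    + apply SV_empty'. intros x Hx; apply Hn; eauto.
  - inversion HL as [|? ? Hv Hvs]; subst.
    set (Q1 := fun x => exists y, B y /\ Q y /\ (forall C, In C L -> (C x <-> C y))).
    set (Q0 := fun x => exists y, ~ B y /\ Q y /\ (forall C, In C L -> (C x <-> C y))).
    assert (H1 : SV V Q1).
    { apply IH; auto. intros x z Hxz [y [Hy1 [Hy2 Hy3]]]. exists y; repeat split; auto;
       intros; [apply Hy3, Hxz| apply Hxz, Hy3]; auto. }
    assert (H0 : SV V Q0).
    { apply IH; auto. intros x z Hxz [y [Hy1 [Hy2 Hy3]]]. exists y; repeat split; auto;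
       intros; [apply Hy3, Hxz| apply Hxz, Hy3]; auto. }
    apply (SV_ext _ _ (SV_union _ _ (SV_inter _ _ Hv H1) (SV_inter _ _ (SV_compl _ Hv) H0))).
    intros x; split.
    + intros Hx. destruct (classic (B x)); [left|right]; split; auto; exists x; repeat split; auto; tauto.
    + intros [[Hb [y [Hy1 [Hy2 Hy3]]]]|[Hb [y [Hy1 [Hy2 Hy3]]]]]; apply (HQ y x); auto;
        intros C [HC|HC]; subst; try tauto; symmetry; apply Hy3; auto.
Qed.

End P1.

Section P2.
Context {X : Type}.
Variable V : set (set X).
Variable v : set X -> R.
Hypothesis Hms : measure_space V v.
Hypothesis HX : V fullset.

Let HpV : prering V := proj1 Hms.
Let Hv0 : forall A, V A -> 0 <= v A := proj1 (proj2 Hms).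
Let Hca := proj2 (proj2 Hms).

Lemma V_empty : V emptyset.
Proof. apply HpV. Qed.

Lemma v_empty : v emptyset = 0.
Proof.
  assert (H := Hca emptyset (fun _ => emptyset) V_empty (fun _ => V_empty)).
  assert (H1 : infinite_sum (fun _ : nat => v emptyset) (v emptyset)).
  { apply H. - intros n m _ x [[] _]. - intros x; split; [intros []|intros [_ []]]. }
  assert (H0 := Hv0 _ V_empty).
  destruct (Rle_lt_or_eq_dec _ _ H0) as [Hp|Hp]; auto.
  destruct (H1 _ Hp) as [N HN]. specialize (HN (S N) ltac:(lia)).
  rewrite sum_cte in HN. unfold Rdist in HN. rewrite S_INR, S_INR in HN.
  assert (0 <= INR N) by apply pos_INR.
  rewrite Rabs_right in HN; nra.
Qed.

Lemma infinite_sum_eventually (f : nat -> R) (c : R) (N : nat) :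
  (forall n, (n >= N)%nat -> sum_f_R0 f n = c) -> infinite_sum f c.
Proof.
  intros H eps He. exists N. intros n Hn. rewrite H; auto. unfold Rdist. rewrite Rminus_diag, Rabs_R0; lra.
Qed.

Definition lsum {T : Type} (f : T -> R) (l : list T) : R := fold_right (fun a acc => f a + acc) 0 l.
Definition ssum (l : list (set X)) : R := lsum v l.

Lemma lsum_app {T} (f : T -> R) l1 l2 : lsum f (l1 ++ l2) = lsum f l1 + lsum f l2.
Proof. induction l1; simpl; [lra| rewrite IHl1; lra]. Qed.

Lemma lsum_plus {T} (f g : T -> R) l : lsum (fun a => f a + g a) l = lsum f l + lsum g l.
Proof. induction l; simpl; [lra| rewrite IHl; lra]. Qed.

Lemma lsum_ext {T} (f g : T -> R) l : (forall a, In a l -> f a = g a) -> lsum f l = lsum g l.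
Proof. induction l; simpl; intros H; auto. rewrite H, IHl; auto. Qed.

Lemma lsum_swap {T U} (g : T -> U -> R) l1 l2 :
  lsum (fun a => lsum (fun b => g a b) l2) l1 = lsum (fun b => lsum (fun a => g a b) l1) l2.
Proof.
  induction l1 as [|a l1 IH]; simpl.
  - induction l2; simpl; auto. rewrite <- IHl2; lra.
  - rewrite IH. rewrite <- lsum_plus. auto.
Qed.

Lemma lsum_concat {T} (f : T -> R) (g : T -> list T) l :
  lsum f (concat (map g l)) = lsum (fun a => lsum f (g a)) l.
Proof. induction l; simpl; auto. rewrite lsum_app, IHl; auto. Qed.

Lemma ssum_nonneg l : Forall V l -> 0 <= ssum l.
Proof. induction 1; unfold ssum; simpl; [lra|]. fold (ssum l). specialize (Hv0 _ H). lra. Qed.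

Lemma sum_nth_ssum l : forall n, (n + 1 >= length l)%nat ->
  sum_f_R0 (fun k => v (nth k l emptyset)) n = ssum l.
Proof.
  induction l as [|a l IH]; intros n Hn.
  - unfold ssum; simpl. assert (E : forall k, nth k (@nil (set X)) emptyset = emptyset) by (destruct k; auto).
    clear Hn. induction n; simpl sum_f_R0; rewrite ?E, ?v_empty; auto. rewrite IHn; lra.
  - destruct n as [|n].
    + simpl in *. assert (l = []) by (destruct l; simpl in Hn; auto; lia). subst. unfold ssum; simpl; lra.
    + rewrite decomp_sum by lia. simpl. rewrite IH by (simpl in Hn; lia). unfold ssum; simpl; auto.
Qed.

Lemma fin_add_V A l : V A -> SVl V A l -> v A = ssum l.
Proof.
  intros HA [H1 [H2 H3]].
  assert (Hn : forall n, V (nth n l emptyset)).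
  { intros n. destruct (Nat.lt_ge_cases n (length l)).
    - rewrite Forall_forall in H1; apply H1, nth_In; auto.
    - rewrite nth_overflow; auto; apply V_empty. }
  assert (Hs := Hca A (fun n => nth n l emptyset) HA Hn).
  assert (Hs' : infinite_sum (fun n => v (nth n l emptyset)) (v A)).
  { apply Hs.
    - intros n m Hnm x [Hx1 Hx2].
      destruct (Nat.lt_ge_cases n (length l)) as [Ln|Ln];
      [|rewrite nth_overflow in Hx1; auto; destruct Hx1].
      destruct (Nat.lt_ge_cases m (length l)) as [Lm|Lm];
      [|rewrite nth_overflow in Hx2; auto; destruct Hx2].
      apply list_disjoint_pd in H2. apply (H2 n m Ln Lm Hnm x); auto.
    - intros x; rewrite H3; split.
      + intros [B [HB Hx]]. destruct (In_nth l B emptyset HB) as [n [_ Hnb]]. exists n; subst; auto.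
      + intros [n Hx]. destruct (Nat.lt_ge_cases n (length l)) as [Ln|Ln].
        * exists (nth n l emptyset); split; auto; apply nth_In; auto.
        * rewrite nth_overflow in Hx; auto; destruct Hx. }
  apply (uniqueness_sum _ _ _ Hs').
  apply (infinite_sum_eventually _ _ (length l)). intros n Hn'. apply sum_nth_ssum. lia.
Qed.

Lemma SVl_ext A B l : SVl V A l -> (forall x, B x <-> A x) -> SVl V B l.
Proof. intros [H1 [H2 H3]] E; repeat split; auto; intros; [apply H3, E|apply E, H3]; auto. Qed.

Lemma SVl_concat (S : set X) (g : set X -> list (set X)) : forall l, pd l ->
  (forall C, In C l -> SVl V (fun x => S x /\ C x) (g C)) ->
  SVl V (fun x => S x /\ lunion l x) (concat (map g l)).
Proof.
  induction l as [|C l IH]; intros Hpd Hg; simpl.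
  - split; [constructor|split; [constructor|]]. intros x; split; [intros [_ [B [[] _]]]|intros [B [[] _]]].
  - assert (HC := Hg C (or_introl eq_refl)). destruct HC as [HC1 [HC2 HC3]].
    assert (Hr : SVl V (fun x => S x /\ lunion l x) (concat (map g l))).
    { apply IH; [eapply pd_cons_tail; eauto| intros; apply Hg; simpl; auto]. }
    destruct Hr as [Hr1 [Hr2 Hr3]].
    split; [|split].
    + apply Forall_app; auto.
    + apply pd_app; auto. intros a b Ha Hb x [Hx1 Hx2].
      assert (Ha' : S x /\ C x) by (apply HC3; exists a; auto).
      assert (Hb' : S x /\ lunion l x) by (apply Hr3; exists b; auto).
      apply (pd_cons_dsj _ _ Hpd x). tauto.
    + intros x; split; [intros [Hs Hx]|intros Hx].
      * apply lunion_app. apply lunion_cons in Hx. destruct Hx as [Hx|Hx].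
        -- left; apply HC3; auto.
        -- right; apply Hr3; auto.
      * apply lunion_app in Hx. destruct Hx as [Hx|Hx].
        -- apply HC3 in Hx. split; [tauto|]. apply lunion_cons; tauto.
        -- apply Hr3 in Hx. split; [tauto|]. apply lunion_cons; tauto.
Qed.

Lemma w_ex (B C : set X) : exists l : list (set X), V B -> V C -> SVl V (fun x => B x /\ C x) l.
Proof.
  destruct (classic (V B /\ V C)) as [[H1 H2]|H].
  - destruct (proj1 (SV_iff V _) (proj1 (proj2 HpV) B C H1 H2)) as [l Hl]. exists l; auto.
  - exists []; intros; tauto.
Qed.

Definition wlist (B C : set X) : list (set X) := proj1_sig (constructive_indefinite_description _ (w_ex B C)).
Lemma wlist_spec B C : V B -> V C -> SVl V (fun x => B x /\ C x) (wlist B C).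
Proof. unfold wlist. destruct (constructive_indefinite_description _ _); auto. Qed.

Lemma ssum_wd A l1 l2 : SVl V A l1 -> SVl V A l2 -> ssum l1 = ssum l2.
Proof.
  intros [H11 [H12 H13]] [H21 [H22 H23]].
  transitivity (lsum (fun B => lsum (fun C => ssum (wlist B C)) l2) l1).
  - unfold ssum at 1. apply lsum_ext. intros B HB.
    rewrite Forall_forall in H11, H21.
    rewrite (fin_add_V B (concat (map (wlist B) l2))); auto.
    + unfold ssum; rewrite lsum_concat; auto.
    + apply (SVl_ext (fun x => B x /\ lunion l2 x)).
      * apply SVl_concat; auto. intros C HC. apply wlist_spec; auto.
      * intros x; split; [|tauto]. intros Hx; split; auto. apply H23, H13. exists B; auto.
  - rewrite lsum_swap. unfold ssum at 2. apply lsum_ext. intros C HC.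
    rewrite Forall_forall in H11, H21.
    rewrite (fin_add_V C (concat (map (fun B => wlist B C) l1))); auto.
    + unfold ssum; rewrite lsum_concat; auto.
    + apply (SVl_ext (fun x => C x /\ lunion l1 x)).
      * apply SVl_concat; auto. intros B HB. apply (SVl_ext _ _ _ (wlist_spec B C (H11 B HB) (H21 C HC))).
        intros; tauto.
      * intros x; split; [|tauto]. intros Hx; split; auto. apply H13, H23. exists C; auto.
Qed.

Definition mu (A : set X) : R :=
  match excluded_middle_informative (exists l, SVl V A l) with
  | left H => ssum (proj1_sig (constructive_indefinite_description _ H))
  | right _ => 0 end.

Lemma mu_spec A l : SVl V A l -> mu A = ssum l.
Proof.
  intros H. unfold mu. destruct (excluded_middle_informative _) as [H'|H'].
  - destruct (constructive_indefinite_description _ _) as [l' Hl']. simpl. eapply ssum_wd; eauto.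
  - exfalso; eauto.
Qed.

Lemma mu_nonneg A : SV V A -> 0 <= mu A.
Proof. intros H. apply SV_iff in H. destruct H as [l Hl]. rewrite (mu_spec _ _ Hl). apply ssum_nonneg, Hl. Qed.

Lemma mu_ext A B : SV V A -> (forall x, B x <-> A x) -> mu B = mu A.
Proof.
  intros H E. apply SV_iff in H. destruct H as [l Hl]. rewrite (mu_spec _ _ Hl).
  apply mu_spec. eapply SVl_ext; eauto.
Qed.

Lemma mu_V A : V A -> mu A = v A.
Proof.
  intros H. rewrite (mu_spec A [A]). - unfold ssum; simpl; lra.
  - repeat split. + constructor; auto. + repeat constructor.
    + intros Hx; exists A; simpl; auto. + intros [B [[HB|[]] Hx]]; subst; auto.
Qed.

Lemma mu_add A B C : SV V A -> SV V B -> dsj A B -> (forall x, C x <-> A x \/ B x) ->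
  mu C = mu A + mu B.
Proof.
  intros HA HB D E. apply SV_iff in HA, HB. destruct HA as [la Ha], HB as [lb Hb].
  rewrite (mu_spec _ _ Ha), (mu_spec _ _ Hb), (mu_spec C (la ++ lb)).
  - unfold ssum; apply lsum_app.
  - destruct Ha as [Ha1 [Ha2 Ha3]], Hb as [Hb1 [Hb2 Hb3]]. repeat split.
    + apply Forall_app; auto.
    + apply pd_app; auto. intros a b Hia Hib x [Hx1 Hx2]. apply (D x); split.
      * apply Ha3; exists a; auto. * apply Hb3; exists b; auto.
    + intros Hx. apply lunion_app. apply E in Hx. rewrite <- Ha3, <- Hb3; auto.
    + intros Hx. apply E. apply lunion_app in Hx. rewrite Ha3, Hb3; auto.
Qed.

Lemma mu_diff A B : SV V A -> SV V B -> (forall x, A x -> B x) ->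
  mu (fun x => B x /\ ~ A x) = mu B - mu A.
Proof.
  intros HA HB Hs. rewrite (mu_add A (fun x => B x /\ ~ A x) B); auto.
  - lra. - apply SV_diff; auto. - intros x; tauto.
  - intros x; split; [intros Hb; destruct (classic (A x)); tauto| intros [H|H]; auto; tauto].
Qed.

Lemma mu_mono A B : SV V A -> SV V B -> (forall x, A x -> B x) -> mu A <= mu B.
Proof.
  intros HA HB Hs. assert (H := mu_diff A B HA HB Hs).
  assert (0 <= mu (fun x => B x /\ ~ A x)) by (apply mu_nonneg, SV_diff; auto). lra.
Qed.

Lemma mu_le_full A : SV V A -> mu A <= v fullset.
Proof. intros H. rewrite <- mu_V; auto. apply mu_mono; auto. - apply SV_V; auto. - unfold fullset; auto. Qed.

End P2.

Section P3.
Context {X : Type}.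
Variable V : set (set X).
Variable v : set X -> R.
Hypothesis Hms : measure_space V v.
Hypothesis HX : V fullset.

Let HpV : prering V := proj1 Hms.
Let Hv0 : forall A, V A -> 0 <= v A := proj1 (proj2 Hms).

Definition cov (D : set X) (c : R) : Prop :=
  exists At : nat -> set X, (forall t, V (At t)) /\ (forall x, D x -> exists t, At t x) /\
    (forall N, sum_f_R0 (fun t => v (At t)) N <= c).

Lemma cov_mono D D' c c' : cov D c -> (forall x, D' x -> D x) -> c <= c' -> cov D' c'.
Proof.
  intros [At [H1 [H2 H3]]] Hs Hc. exists At; repeat split; auto.
  intros N; specialize (H3 N); lra.
Qed.

Lemma cv_le (u : nat -> R) l c : Un_cv u l -> (forall n, u n <= c) -> l <= c.
Proof.
  intros Hu Hc. destruct (Rle_or_lt l c) as [H|H]; auto.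
  destruct (Hu (l - c)) as [N HN]; [lra|]. specialize (HN N (le_n _)). specialize (Hc N).
  unfold Rdist in HN. apply Rabs_def2 in HN. lra.
Qed.

Lemma sum_growing (f : nat -> R) : (forall n, 0 <= f n) -> Un_growing (sum_f_R0 f).
Proof. intros H n. simpl. specialize (H (S n)). lra. Qed.

Lemma null_of_cov D : (forall eps, 0 < eps -> exists c, c < eps /\ cov D c) -> null_set V v D.
Proof.
  intros H eps He. destruct (H eps He) as [c [Hc [At [H1 [H2 H3]]]]].
  assert (Hg : Un_growing (sum_f_R0 (fun t => v (At t)))) by (apply sum_growing; intros; apply Hv0; auto).
  destruct (growing_cv _ Hg) as [l Hl].
  { exists c. intros r [i Hi]. subst. apply H3. }
  exists At, l. repeat split; auto.
  assert (l <= c) by (apply (cv_le _ _ _ Hl); auto). lra.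
Qed.

Lemma cov_of_null D : null_set V v D -> forall eps, 0 < eps -> exists c, c < eps /\ cov D c.
Proof.
  intros H eps He. destruct (H eps He) as [At [l [H1 [H2 [H3 H4]]]]].
  exists l; split; auto. exists At; repeat split; auto.
  intros N. apply growing_ineq; auto. apply sum_growing; intros; apply Hv0; auto.
Qed.

Lemma null_subset D D' : null_set V v D -> (forall x, D' x -> D x) -> null_set V v D'.
Proof.
  intros H Hs eps He. destruct (H eps He) as [At [l [H1 [H2 [H3 H4]]]]].
  exists At, l; repeat split; auto.
Qed.

Lemma sum_mono_idx (f : nat -> R) : (forall n, 0 <= f n) -> forall n k, sum_f_R0 f n <= sum_f_R0 f (n + k).
Proof.
  intros H n k. induction k. - rewrite Nat.add_0_r; lra.
  - rewrite Nat.add_succ_r. simpl. specialize (H (S (n + k))). lra.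
Qed.

Lemma cov_SV T : SV V T -> cov T (mu V v T).
Proof.
  intros HT. apply SV_iff in HT. destruct HT as [l Hl]. rewrite (mu_spec V v Hms _ _ Hl).
  destruct Hl as [H1 [H2 H3]].
  exists (fun t => nth t l emptyset). repeat split.
  - intros n. destruct (Nat.lt_ge_cases n (length l)).
    + rewrite Forall_forall in H1; apply H1, nth_In; auto.
    + rewrite nth_overflow; auto; apply (V_empty V v Hms).
  - intros x Hx. apply H3 in Hx. destruct Hx as [B [HB Hx]].
    destruct (In_nth l B emptyset HB) as [n [_ Hnb]]. exists n; subst; auto.
  - intros N. rewrite <- (sum_nth_ssum V v Hms l (N + length l)) by lia.
    apply sum_mono_idx. intros n. destruct (Nat.lt_ge_cases n (length l)).
    + rewrite Forall_forall in H1; apply Hv0, H1, nth_In; auto.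
    + rewrite nth_overflow; auto; apply Hv0, (V_empty V v Hms).
Qed.

Lemma lsum_incl {T : Type} (a : T -> R) : (forall x, 0 <= a x) ->
  forall L M, NoDup L -> incl L M -> lsum a L <= lsum a M.
Proof.
  intros Ha. induction L as [|q L IH]; intros M HN HI.
  - simpl. clear HN HI. induction M as [|b M IHM]; simpl; [lra|]. specialize (Ha b). lra.
  - inversion HN as [|? ? Hq HN']; subst.
    assert (Hq' : In q M) by (apply HI; simpl; auto).
    destruct (in_split _ _ Hq') as [M1 [M2 E]]. subst M.
    rewrite lsum_app. simpl. replace (lsum a M1 + (a q + lsum a M2)) with (a q + (lsum a M1 + lsum a M2)) by lra.
    rewrite <- lsum_app. apply Rplus_le_compat_l. apply IH; auto.
    intros x Hx. assert (Hx' : In x (M1 ++ q :: M2)) by (apply HI; simpl; auto).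
    apply in_app_or in Hx'. apply in_or_app. destruct Hx' as [Hx'|[Hx'|Hx']]; auto.
    subst; contradiction.
Qed.

Lemma sum_lsum (f : nat -> R) N : sum_f_R0 f N = lsum f (seq 0 (S N)).
Proof.
  induction N. - simpl; lra. - rewrite tech5, IHN. rewrite (seq_S (S N) 0). rewrite lsum_app. simpl. lra.
Qed.

Lemma lsum_prod {T U : Type} (a : T * U -> R) l1 l2 :
  lsum a (list_prod l1 l2) = lsum (fun k => lsum (fun j => a (k, j)) l2) l1.
Proof.
  induction l1 as [|k l1 IH]; simpl; auto. rewrite lsum_app, IH. f_equal.
  clear IH; induction l2; simpl; auto. rewrite IHl2; auto.
Qed.

Lemma lsum_map {T U : Type} (a : U -> R) (f : T -> U) l : lsum a (map f l) = lsum (fun x => a (f x)) l.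
Proof. induction l; simpl; auto. rewrite IHl; auto. Qed.

Lemma lsum_le {T : Type} (f g : T -> R) l : (forall x, In x l -> f x <= g x) -> lsum f l <= lsum g l.
Proof. induction l; simpl; intros H; [lra|]. apply Rplus_le_compat; auto. Qed.

Lemma cov_union (D : nat -> set X) (c : nat -> R) (C : R) :
  (forall k, cov (D k) (c k)) -> (forall K, sum_f_R0 c K <= C) ->
  cov (fun x => exists k, D k x) C.
Proof.
  intros Hk HC.
  set (At := fun k => proj1_sig (constructive_indefinite_description _ (Hk k))).
  assert (HA : forall k, (forall t, V (At k t)) /\ (forall x, D k x -> exists t, At k t x) /\
    (forall N, sum_f_R0 (fun t => v (At k t)) N <= c k)).
  { intros k. unfold At. destruct (constructive_indefinite_description _ _); auto. }
  set (a := fun p : nat * nat => v (At (fst p) (snd p))).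
  assert (Ha : forall p, 0 <= a p) by (intros [k j]; apply Hv0, HA).
  exists (fun n => At (fst (of_nat n)) (snd (of_nat n))). repeat split.
  - intros n; apply HA.
  - intros x [k Hx]. destruct (proj1 (proj2 (HA k)) x Hx) as [j Hj].
    exists (to_nat (k, j)). rewrite cancel_of_to. auto.
  - intros N. rewrite sum_lsum.
    change (lsum (fun n => a (of_nat n)) (seq 0 (S N)) <= C).
    rewrite <- lsum_map.
    apply Rle_trans with (lsum a (list_prod (seq 0 (S N)) (seq 0 (S N)))).
    + apply lsum_incl; auto.
      * apply NoDup_map_NoDup_ForallPairs; [|apply seq_NoDup].
        intros x y _ _ E. rewrite <- (cancel_to_of x), <- (cancel_to_of y), E. auto.
      * intros p Hp. apply in_map_iff in Hp. destruct Hp as [n [E Hn]]. subst p.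
        apply in_seq in Hn. destruct (of_nat n) as [k j] eqn:E.
        assert (Hb := to_nat_non_decreasing k j). rewrite <- E, cancel_to_of in Hb.
        apply in_prod; apply in_seq; lia.
    + rewrite lsum_prod.
      apply Rle_trans with (lsum c (seq 0 (S N))).
      * apply lsum_le. intros k _. cbv beta. rewrite <- sum_lsum. unfold a; simpl. apply HA.
      * rewrite <- sum_lsum; auto.
Qed.

Lemma cov_empty D : (forall x, ~ D x) -> cov D 0.
Proof.
  intros H. exists (fun _ => emptyset). split; [|split].
  - intros; apply (V_empty V v Hms).
  - intros x Hx; destruct (H x Hx).
  - intros N. rewrite (v_empty V v Hms). rewrite sum_cte. lra.
Qed.

Lemma null_union D1 D2 : null_set V v D1 -> null_set V v D2 -> null_set V v (fun x => D1 x \/ D2 x).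
Proof.
  intros H1 H2. apply null_of_cov. intros eps He.
  destruct (cov_of_null _ H1 (eps/2)) as [c1 [Hc1 C1]]; [lra|].
  destruct (cov_of_null _ H2 (eps/2)) as [c2 [Hc2 C2]]; [lra|].
  assert (c1 >= 0). { destruct C1 as [At [Ha [_ Hs]]]. specialize (Hs 0%nat). simpl in Hs. specialize (Hv0 _ (Ha 0%nat)). lra. }
  assert (c2 >= 0). { destruct C2 as [At [Ha [_ Hs]]]. specialize (Hs 0%nat). simpl in Hs. specialize (Hv0 _ (Ha 0%nat)). lra. }
  exists (c1 + c2). split; [lra|].
  apply (cov_mono (fun x => exists k, (match k with 0%nat => D1 | 1%nat => D2 | _ => emptyset end) x) _ (c1 + c2)).
  - apply (cov_union _ (fun k => match k with 0%nat => c1 | 1%nat => c2 | _ => 0 end)).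
    + intros [|[|k]]; auto. apply cov_empty. intros x [].
    + intros K. destruct K as [|[|K]]; simpl; try lra.
      induction K; simpl in *; lra.
  - intros x [Hx|Hx]; [exists 0%nat|exists 1%nat]; auto.
  - lra.
Qed.

End P3.

Section P4.
Context {X : Type}.
Variable V : set (set X).
Variable v : set X -> R.
Hypothesis Hms : measure_space V v.
Hypothesis HX : V fullset.

Let HpV : prering V := proj1 Hms.
Let Hv0 : forall A, V A -> 0 <= v A := proj1 (proj2 Hms).

Lemma indic_in (A : set X) x : A x -> indic A x = 1.
Proof. unfold indic; destruct (excluded_middle_informative (A x)); tauto. Qed.
Lemma indic_out (A : set X) x : ~ A x -> indic A x = 0.
Proof. unfold indic; destruct (excluded_middle_informative (A x)); tauto. Qed.

Lemma indic_lunion (la : list (set X)) (x : X) : pd la -> lsum (fun B => indic B x) la = indic (lunion la) x.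
Proof.
  induction la as [|a la IH]; intros Hpd; simpl.
  - rewrite indic_out; auto. intros [B [[] _]].
  - rewrite IH by (eapply pd_cons_tail; eauto).
    assert (D := pd_cons_dsj _ _ Hpd x).
    destruct (classic (a x)) as [Ha|Ha].
    + assert (lunion (a :: la) x) by (apply lunion_cons; auto).
      rewrite (indic_in a), (indic_out (lunion la)), (indic_in (lunion (a::la))); auto; try tauto. ring.
    + rewrite (indic_out a); auto. rewrite Rplus_0_l.
      destruct (classic (lunion la x)).
      * rewrite !indic_in; auto. apply lunion_cons; auto.
      * rewrite !indic_out; auto. rewrite lunion_cons; tauto.
Qed.

Definition mkrep (r : R) (la : list (set X)) : list (R * set X) := map (fun B => (r, B)) la.

Lemma mkrep_val r T la x : SVl V T la ->
  fold_right (fun p acc => fst p * indic (snd p) x + acc) 0 (mkrep r la) = r * indic T x.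
Proof.
  intros [H1 [H2 H3]]. change (lsum (fun p => fst p * indic (snd p) x) (mkrep r la) = r * indic T x).
  unfold mkrep. rewrite lsum_map. simpl.
  transitivity (r * lsum (fun B => indic B x) la).
  - clear. induction la; simpl; [ring|]. rewrite IHla. ring.
  - rewrite indic_lunion; auto. f_equal. unfold indic.
    destruct (excluded_middle_informative (lunion la x)), (excluded_middle_informative (T x)); auto;
     exfalso; firstorder.
Qed.

Lemma mkrep_norm r T la : SVl V T la -> rep_norm v (mkrep r la) = Rabs r * mu V v T.
Proof.
  intros Hl. rewrite (mu_spec V v Hms _ _ Hl). unfold rep_norm, rep_integral, mkrep.
  rewrite map_map. change (lsum (fun p => fst p * v (snd p)) (map (fun x => (Rabs r, x)) la) = Rabs r * ssum v la).
  rewrite lsum_map. simpl. unfold ssum. clear. induction la; simpl; [ring|]. rewrite IHla; ring.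
Qed.

Lemma mkrep_snd r la : map snd (mkrep r la) = la.
Proof. unfold mkrep; rewrite map_map; simpl; apply map_id. Qed.

Lemma SV_simple T : SV V T -> simple_norm_le V v (indic T) (mu V v T).
Proof.
  intros HT. apply SV_iff in HT. destruct HT as [la Hl].
  exists (mkrep 1 la). split; [split; [|split]|].
  - unfold mkrep. apply Forall_map. simpl. apply Hl.
  - rewrite mkrep_snd. apply list_disjoint_pd, Hl.
  - intros x. rewrite (mkrep_val 1 T la x Hl). ring.
  - rewrite (mkrep_norm 1 T la Hl). rewrite Rabs_R1; lra.
Qed.

Lemma SV_simple_diff T1 T2 : SV V T1 -> SV V T2 ->
  simple_norm_le V v (fun x => indic T2 x - indic T1 x)
    (mu V v (fun x => T2 x /\ ~ T1 x) + mu V v (fun x => T1 x /\ ~ T2 x)).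
Proof.
  intros H1 H2.
  assert (Ha := SV_diff V HpV _ _ H2 H1). assert (Hb := SV_diff V HpV _ _ H1 H2).
  apply SV_iff in Ha, Hb. destruct Ha as [la Ha], Hb as [lb Hb].
  exists (mkrep 1 la ++ mkrep (-1) lb). split; [split; [|split]|].
  - unfold mkrep. apply Forall_app; split; apply Forall_map; simpl; [apply Ha|apply Hb].
  - rewrite map_app, !mkrep_snd. apply list_disjoint_pd. apply pd_app; [apply Ha|apply Hb|].
    intros a b Hia Hib x [Hx1 Hx2].
    assert (P1 : T2 x /\ ~ T1 x) by (apply Ha; exists a; auto).
    assert (P2 : T1 x /\ ~ T2 x) by (apply Hb; exists b; auto). tauto.
  - intros x. rewrite fold_right_app. 
    change (fold_right (fun p acc => fst p * indic (snd p) x + acc) 0 (mkrep (-1) lb)) with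
      (lsum (fun p => fst p * indic (snd p) x) (mkrep (-1) lb)) at 1.
    assert (E : forall l c, fold_right (fun p acc => fst p * indic (snd p) x + acc) c l =
                 fold_right (fun p acc => fst p * indic (snd p) x + acc) 0 l + c).
    { induction l; intros c; simpl; [ring|]. rewrite IHl; ring. }
    rewrite E. change (lsum (fun p => fst p * indic (snd p) x) (mkrep (-1) lb)) with
      (fold_right (fun p acc => fst p * indic (snd p) x + acc) 0 (mkrep (-1) lb)).
    rewrite (mkrep_val 1 _ la x Ha), (mkrep_val (-1) _ lb x Hb).
    unfold indic. repeat destruct (excluded_middle_informative _); try ring; exfalso; tauto.
  - unfold rep_norm, rep_integral. rewrite map_app. 
    assert (E : forall l c, fold_right (fun p acc => fst p * v (snd p) + acc) c l =
                 fold_right (fun p acc => fst p * v (snd p) + acc) 0 l + c).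
    { induction l; intros c; simpl; [ring|]. rewrite IHl; ring. }
    rewrite fold_right_app, E.
    assert (N1 := mkrep_norm 1 _ la Ha). assert (N2 := mkrep_norm (-1) _ lb Hb).
    unfold rep_norm, rep_integral in N1, N2. rewrite N1, N2. rewrite Rabs_R1. replace (Rabs (-1)) with 1 by (rewrite Rabs_left; lra). lra.
Qed.

Lemma v_full_nonneg : 0 <= v fullset.
Proof. apply Hv0; auto. Qed.

Lemma approx_L1 (T : nat -> set X) (f : X -> R) (c : R) (N : set X) :
  (forall k, SV V (T k)) -> 0 <= c ->
  (forall k, mu V v (fun x => T (S k) x /\ ~ T k x) + mu V v (fun x => T k x /\ ~ T (S k) x) <= c * (/4) ^ (S k)) ->
  null_set V v N -> (forall x, ~ N x -> Un_cv (fun k => indic (T k) x) (f x)) -> L1 V v f.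
Proof.
  intros HT Hc Hd HN Hcv.
  set (h := fun k x => match k with 0%nat => indic (T 0%nat) x | S k => indic (T (S k)) x - indic (T k) x end).
  assert (Hs : forall n x, sum_f_R0 (fun k => h k x) n = indic (T n) x).
  { induction n; intros x; simpl; auto. rewrite IHn. ring. }
  exists (fun n x => indic (T n) x), N. split; [|split; auto].
  exists h, (4 * (v fullset + c)). split; [|intros; symmetry; apply Hs].
  assert (Hvf := v_full_nonneg).
  intros [|k].
  - destruct (SV_simple _ (HT 0%nat)) as [l [Hl1 Hl2]]. exists l; split; auto.
    assert (mu V v (T 0%nat) <= v fullset) by (apply (mu_le_full V v Hms HX); auto).
    simpl. lra.
  - destruct (SV_simple_diff _ _ (HT k) (HT (S k))) as [l [Hl1 Hl2]]. exists l; split; auto.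
    eapply Rle_trans; [apply Hl2|]. eapply Rle_trans; [apply Hd|].
    replace (4 * (v fullset + c) * (/ 4) ^ S (S k)) with ((v fullset + c) * (/4) ^ S k)
      by (simpl; field).
    apply Rmult_le_compat_r; [apply pow_le; lra | lra].
Qed.

Lemma Un_cv_shift (u : nat -> R) l : Un_cv u l -> Un_cv (fun n => u (S n)) l.
Proof. intros H eps He. destruct (H eps He) as [N HN]. exists N. intros n Hn. apply HN. lia. Qed.

Lemma Un_cv_unshift (u : nat -> R) l : Un_cv (fun n => u (S n)) l -> Un_cv u l.
Proof. intros H eps He. destruct (H eps He) as [N HN]. exists (S N). intros [|n] Hn; [lia|]. apply HN. lia. Qed.

Lemma simple_neg h b : simple_norm_le V v h b -> simple_norm_le V v (fun x => - h x) b.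
Proof.
  intros [l [[H1 [H2 H3]] H4]]. exists (map (fun p => (- fst p, snd p)) l). split; [split; [|split]|].
  - apply Forall_map. simpl. auto.
  - rewrite map_map. simpl. auto.
  - intros x. rewrite H3. clear. induction l; simpl; [ring|]. rewrite <- IHl. ring.
  - unfold rep_norm, rep_integral in *. rewrite map_map. simpl.
    replace (fold_right (fun (p : R * set X) (acc : R) => fst p * v (snd p) + acc) 0
       (map (fun x : R * set X => (Rabs (- fst x), snd x)) l))
      with (fold_right (fun (p : R * set X) (acc : R) => fst p * v (snd p) + acc) 0
       (map (fun x : R * set X => (Rabs (fst x), snd x)) l)); auto.
    clear. induction l; simpl; auto. rewrite IHl, Rabs_Ropp; auto.
Qed.

Lemma L1_compl A : Vc V v A -> Vc V v (fun x => ~ A x).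
Proof.
  intros [s [N [[h [M [Hh Hs]]] [HN Hcv]]]].
  set (h' := fun k x => match k with 0%nat => 1 | S k => - h k x end).
  exists (fun n x => sum_f_R0 (fun k => h' k x) n), N. split; [|split; auto].
  - exists h', (4 * (v fullset + Rabs M)). split; auto.
    assert (Hvf := v_full_nonneg).
    intros [|k].
    + exists [(1, fullset)]. split; [split; [|split]|].
      * repeat constructor; auto.
      * apply list_disjoint_pd. repeat constructor.
      * intros x; simpl. rewrite indic_in; [ring|exact I].
      * unfold rep_norm, rep_integral; simpl. rewrite Rabs_R1. simpl. assert (0 <= Rabs M) by apply Rabs_pos. lra.
    + destruct (simple_neg _ _ (Hh k)) as [l [Hl1 Hl2]]. exists l; split; auto.
      eapply Rle_trans; [apply Hl2|].
      replace (4 * (v fullset + Rabs M) * (/ 4) ^ S (S k)) with ((v fullset + Rabs M) * (/4) ^ S k)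
        by (simpl; field).
      apply Rmult_le_compat_r; [apply pow_le; lra |]. assert (M <= Rabs M) by apply RRle_abs. lra.
  - intros x Hx. apply Un_cv_unshift. cbv beta.
    assert (E : forall n, sum_f_R0 (fun k => h' k x) (S n) = 1 - s n x).
    { intros n. rewrite Hs. induction n. - simpl. ring. - rewrite tech5, IHn, tech5. simpl (h' _ x). ring. }
    intros eps He. destruct (Hcv x Hx eps He) as [N0 HN0]. exists N0. intros n Hn.
    rewrite E. specialize (HN0 n Hn). unfold Rdist in *.
    replace (indic (fun x => ~ A x) x) with (1 - indic A x).
    + replace (1 - s n x - (1 - indic A x)) with (- (s n x - indic A x)) by ring. rewrite Rabs_Ropp; auto.
    + unfold indic. repeat destruct (excluded_middle_informative _); try ring; tauto.
Qed.

Lemma L1_nullmod f g D : L1 V v f -> null_set V v D -> (forall x, ~ D x -> g x = f x) -> L1 V v g.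
Proof.
  intros [s [N [Hb [HN Hcv]]]] HD E. exists s, (fun x => N x \/ D x). repeat split; auto.
  - apply null_union; auto.
  - intros x Hx. rewrite E by tauto. apply Hcv. tauto.
Qed.

End P4.

Section P5.
Context {X : Type}.
Variable V : set (set X).
Variable v : set X -> R.
Hypothesis Hms : measure_space V v.
Hypothesis HX : V fullset.

Let HpV : prering V := proj1 Hms.

Lemma sigma_SV (C : nat -> set X) : (forall n, SV V (C n)) -> sigma_of V (fun x => exists n, C n x).
Proof.
  intros HC.
  set (l := fun n => proj1_sig (constructive_indefinite_description _ (proj1 (SV_iff V (C n)) (HC n)))).
  assert (Hl : forall n, SVl V (C n) (l n)).
  { intros n. unfold l. destruct (constructive_indefinite_description _ _); auto. }
  exists (fun p => nth (snd (of_nat p)) (l (fst (of_nat p))) emptyset). split.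
  - intros p. destruct (Nat.lt_ge_cases (snd (of_nat p)) (length (l (fst (of_nat p))))).
    + destruct (Hl (fst (of_nat p))) as [H1 _]. rewrite Forall_forall in H1. apply H1, nth_In; auto.
    + rewrite nth_overflow; auto. apply (V_empty V v Hms).
  - intros x; split.
    + intros [n Hx]. apply (Hl n) in Hx. destruct Hx as [B [HB Hx]].
      destruct (In_nth _ B emptyset HB) as [i [_ Hi]]. exists (to_nat (n, i)). rewrite cancel_of_to; simpl. subst; auto.
    + intros [p Hx]. exists (fst (of_nat p)). apply (Hl _).
      destruct (Nat.lt_ge_cases (snd (of_nat p)) (length (l (fst (of_nat p))))).
      * exists (nth (snd (of_nat p)) (l (fst (of_nat p))) emptyset); split; auto. apply nth_In; auto.
      * rewrite nth_overflow in Hx; auto. destruct Hx.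
Qed.

Lemma compl_ds B : sigma_of (delta_of (SV V)) B -> delta_of (sigma_of V) (fun x => ~ B x).
Proof.
  intros [Bn [HBn EB]].
  set (C := fun m => proj1_sig (constructive_indefinite_description _ (HBn m))).
  assert (HC : forall m, (forall n, SV V (C m n)) /\ (forall x, Bn m x <-> forall n, C m n x)).
  { intros m. unfold C. destruct (constructive_indefinite_description _ _); auto. }
  exists (fun m x => exists n, ~ C m n x). split.
  - intros m. apply sigma_SV. intros n. apply SV_compl; auto. apply HC.
  - intros x. rewrite EB. split.
    + intros H m. apply not_all_ex_not. intros H'. apply H. exists m. apply (proj2 (HC m)); auto.
    + intros H [m Hm]. destruct (H m) as [n Hn]. apply Hn. exact (proj1 (proj2 (HC m) x) Hm n).
Qed.

Lemma compl_sd B : delta_of (sigma_of V) B -> sigma_of (delta_of (SV V)) (fun x => ~ B x).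
Proof.
  intros [Bn [HBn EB]].
  set (C := fun m => proj1_sig (constructive_indefinite_description _ (HBn m))).
  assert (HC : forall m, (forall n, V (C m n)) /\ (forall x, Bn m x <-> exists n, C m n x)).
  { intros m. unfold C. destruct (constructive_indefinite_description _ _); auto. }
  exists (fun m x => forall n, ~ C m n x). split.
  - intros m. exists (fun n x => ~ C m n x). split; [|tauto].
    intros n. apply SV_compl; auto. apply SV_V, HC.
  - intros x. rewrite EB. split.
    + intros H. apply not_all_ex_not in H. destruct H as [m Hm]. exists m. intros n Hn. apply Hm, (proj2 (HC m) x). eauto.
    + intros [m Hm] H. destruct (proj1 (proj2 (HC m) x) (H m)) as [n Hn]. eapply Hm; eauto.
Qed.

Lemma fold_dep (l : list (R * set X)) x y : (forall p, In p l -> (snd p x <-> snd p y)) ->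
  fold_right (fun p acc => fst p * indic (snd p) x + acc) 0 l =
  fold_right (fun p acc => fst p * indic (snd p) y + acc) 0 l.
Proof.
  induction l as [|p l IH]; intros H; simpl; auto. rewrite IH by (intros; apply H; simpl; auto).
  f_equal. f_equal. unfold indic. assert (Hp := H p (or_introl eq_refl)).
  repeat destruct (excluded_middle_informative _); tauto.
Qed.

Lemma Vc_to_b A : Vc V v A -> exists B D, sigma_of (delta_of (SV V)) B /\ null_set V v D /\
                 (forall x, A x <-> symdiff B D x).
Proof.
  intros [s [N [[h [M [Hh Hs]]] [HN Hcv]]]].
  set (rep := fun k => proj1_sig (constructive_indefinite_description _ (Hh k))).
  assert (Hrep : forall k, simple_rep V (rep k) (h k)).
  { intros k. unfold rep. destruct (constructive_indefinite_description _ _) as [l Hl]; simpl; apply Hl. }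
  assert (HC : forall n, SV V (fun x => s n x > 1/2)).
  { intros n.
    apply (SV_bool V HpV HX (concat (map (fun k => map snd (rep k)) (seq 0 (S n))))).
    - apply Forall_forall. intros B HB. apply in_concat in HB. destruct HB as [lb [Hlb HB]].
      apply in_map_iff in Hlb. destruct Hlb as [k [E _]]. subst lb.
      apply in_map_iff in HB. destruct HB as [p [E Hp]]. subst B.
      destruct (Hrep k) as [H1 _]. rewrite Forall_forall in H1. apply SV_V, H1; auto.
    - intros x y Hxy Hx. rewrite Hs in *.
      replace (sum_f_R0 (fun k => h k y) n) with (sum_f_R0 (fun k => h k x) n); auto.
      apply sum_eq. intros k Hk. destruct (Hrep k) as [_ [_ H3]]. rewrite !H3.
      apply fold_dep. intros p Hp. apply Hxy. apply in_concat. exists (map snd (rep k)). split.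
      + apply in_map_iff. exists k; split; auto. apply in_seq. lia.
      + apply in_map; auto. }
  set (B := fun x => exists m, forall n, s (m + n)%nat x > 1/2).
  exists B, (fun x => (A x /\ ~ B x) \/ (B x /\ ~ A x)). split; [|split].
  - exists (fun m x => forall n, s (m + n)%nat x > 1/2). split; [|intros; unfold B; tauto].
    intros m. exists (fun n x => s (m + n)%nat x > 1/2). split; auto. tauto.
  - apply (null_subset V v N); auto. intros x Hx. apply NNPP. intros Hn.
    specialize (Hcv x Hn (1/2) ltac:(lra)). destruct Hcv as [N0 HN0].
    destruct Hx as [[HA HB]|[HB HA]].
    + apply HB. exists N0. intros n. specialize (HN0 (N0 + n)%nat ltac:(lia)).
      rewrite indic_in in HN0; auto. unfold Rdist in HN0. apply Rabs_def2 in HN0. lra.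
    + destruct HB as [m Hm]. specialize (Hm N0). specialize (HN0 (m + N0)%nat ltac:(lia)).
      rewrite indic_out in HN0; auto. unfold Rdist in HN0. apply Rabs_def2 in HN0. lra.
  - intros x. unfold symdiff. destruct (classic (A x)), (classic (B x)); tauto.
Qed.

End P5.

Lemma Un_cv_event (u : nat -> R) l : (exists J, forall j, (j >= J)%nat -> u j = l) -> Un_cv u l.
Proof.
  intros [J HJ] eps He. exists J. intros n Hn. rewrite HJ; auto. unfold Rdist. rewrite Rminus_diag, Rabs_R0; lra.
Qed.

Lemma geom_bound (J K : nat) : sum_f_R0 (fun i => (/4) ^ (S (J + i))) K <= (/4) ^ (S J) * (4/3).
Proof.
  replace (sum_f_R0 (fun i => (/4) ^ (S (J + i))) K) with (sum_f_R0 (fun i => (/4) ^ i * (/4) ^ (S J)) K).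
  - rewrite <- scal_sum. rewrite tech3 by lra.
    assert (0 <= (/4) ^ S K) by (apply pow_le; lra). assert (0 < (/4) ^ S J) by (apply pow_lt; lra).
    apply Rmult_le_compat_l; [lra|]. unfold Rdiv. 
    replace (/ (1 - /4)) with (4/3) by field. lra.
  - apply sum_eq. intros i _. rewrite <- pow_add. f_equal. lia.
Qed.

Lemma telescope (u : nat -> R) K : sum_f_R0 (fun n => u n - u (S n)) K = u 0%nat - u (S K).
Proof. induction K; simpl; [lra|]. simpl in IHK. rewrite IHK. lra. Qed.

Section P6.
Context {X : Type}.
Variable V : set (set X).
Variable v : set X -> R.
Hypothesis Hms : measure_space V v.
Hypothesis HX : V fullset.
Let HpV : prering V := proj1 Hms.

Variable C : nat -> nat -> set X.
Hypothesis HC : forall m n, SV V (C m n).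

Fixpoint P (m n : nat) : set X :=
  match n with 0%nat => C m 0%nat | S n => fun x => P m n x /\ C m (S n) x end.
Fixpoint D (k n : nat) : set X :=
  match k with 0%nat => P 0%nat n | S k => fun x => D k n x \/ P (S k) n x end.

Lemma P_SV m n : SV V (P m n).
Proof. induction n; simpl; auto. apply SV_inter; auto. Qed.
Lemma D_SV k n : SV V (D k n).
Proof. induction k; simpl; [apply P_SV|]. apply SV_union; auto. apply P_SV. Qed.

Lemma P_dec m n n' x : (n <= n')%nat -> P m n' x -> P m n x.
Proof. induction 1; simpl; auto. intros [H1 _]; auto. Qed.
Lemma D_dec k n n' x : (n <= n')%nat -> D k n' x -> D k n x.
Proof. intros Hn. induction k; simpl. - apply P_dec; auto. - intros [H|H]; [left|right]; auto. eapply P_dec; eauto. Qed.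
Lemma D_inc k k' n x : (k <= k')%nat -> D k n x -> D k' n x.
Proof. induction 1; simpl; auto. Qed.
Lemma P_all m x : (forall i, C m i x) -> forall n, P m n x.
Proof. intros H n; induction n; simpl; auto. Qed.
Lemma D_P m k n x : (m <= k)%nat -> P m n x -> D m n x.
Proof. intros _. destruct m; simpl; auto. Qed.
Lemma P_C m n x : P m n x -> C m n x.
Proof. destruct n; simpl; tauto. Qed.

Lemma D_out x : (forall m, ~ forall i, C m i x) -> forall k, exists n, ~ D k n x.
Proof.
  intros H. induction k.
  - destruct (not_all_ex_not _ _ (H 0%nat)) as [i Hi]. exists i. simpl. intros Hp. apply Hi, P_C; auto.
  - destruct IHk as [n1 Hn1]. destruct (not_all_ex_not _ _ (H (S k))) as [i Hi].
    exists (max n1 i). simpl. intros [Hd|Hp].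
    + apply Hn1. eapply D_dec; [|eauto]. lia.
    + apply Hi. apply P_C. eapply P_dec; [|eauto]. lia.
Qed.

Definition d k n := mu V v (D k n).

Lemma d_dec k : Un_decreasing (d k).
Proof. intros n. unfold d. apply (mu_mono V v Hms); try apply D_SV. intros x; apply D_dec; lia. Qed.
Lemma d_lb k : has_lb (d k).
Proof. exists 0. intros r [i Hi]. subst. unfold opp_seq. assert (0 <= d k i) by apply (mu_nonneg V v Hms), D_SV. lra. Qed.

Definition a k := proj1_sig (decreasing_cv _ (d_dec k) (d_lb k)).
Lemma a_cv k : Un_cv (d k) (a k).
Proof. unfold a; destruct (decreasing_cv _ _ _); auto. Qed.
Lemma a_le k n : a k <= d k n.
Proof. apply decreasing_ineq; [apply d_dec|apply a_cv]. Qed.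
Lemma a_inc : Un_growing a.
Proof.
  intros k. apply (Rle_cv_lim (Un := d k) (Vn := d (S k))); try apply a_cv.
  intros n. unfold d. apply (mu_mono V v Hms); try apply D_SV. intros x; apply D_inc; lia.
Qed.
Lemma a_ub : has_ub a.
Proof.
  exists (v fullset). intros r [i Hi]. subst. apply (cv_le _ _ _ (a_cv i)).
  intros n. unfold d. apply (mu_le_full V v Hms HX), D_SV.
Qed.
Definition ainf := proj1_sig (growing_cv _ a_inc a_ub).
Lemma ainf_cv : Un_cv a ainf.
Proof. unfold ainf; destruct (growing_cv _ _ _); auto. Qed.
Lemma a_le_inf k : a k <= ainf.
Proof. apply growing_ineq; [apply a_inc|apply ainf_cv]. Qed.

Definition e (j : nat) : R := (/4) ^ (S j).
Lemma e_pos j : 0 < e j.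
Proof. apply pow_lt; lra. Qed.

Lemma Kex j : exists K, forall k, (k >= K)%nat -> ainf - a k <= e j.
Proof.
  destruct (ainf_cv (e j) (e_pos j)) as [N HN]. exists N. intros k Hk. specialize (HN k Hk).
  unfold Rdist in HN. apply Rabs_def2 in HN. lra.
Qed.
Definition Kf j := proj1_sig (constructive_indefinite_description _ (Kex j)).
Lemma Kf_spec j k : (k >= Kf j)%nat -> ainf - a k <= e j.
Proof. unfold Kf; destruct (constructive_indefinite_description _ _); auto. Qed.

Lemma Nex k j : exists N, forall n, (n >= N)%nat -> d k n <= a k + e j.
Proof.
  destruct (a_cv k (e j) (e_pos j)) as [N HN]. exists N. intros n Hn. specialize (HN n Hn).
  unfold Rdist in HN. apply Rabs_def2 in HN. lra.
Qed.
Definition Nf k j := proj1_sig (constructive_indefinite_description _ (Nex k j)).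
Lemma Nf_spec k j n : (n >= Nf k j)%nat -> d k n <= a k + e j.
Proof. unfold Nf; destruct (constructive_indefinite_description _ _); auto. Qed.

Fixpoint kk j := match j with 0%nat => Kf 0%nat | S j => max (Kf (S j)) (S (kk j)) end.
Fixpoint nn j := match j with 0%nat => Nf (kk 0%nat) 0%nat | S j => max (Nf (kk (S j)) (S j)) (S (nn j)) end.

Lemma kk_ge j : (kk j >= Kf j)%nat.
Proof. destruct j; simpl; lia. Qed.
Lemma kk_S j : (kk j < kk (S j))%nat.
Proof. simpl; lia. Qed.
Lemma kk_j j : (j <= kk j)%nat.
Proof. induction j; [lia|]. assert (H := kk_S j). lia. Qed.
Lemma nn_ge j : (nn j >= Nf (kk j) j)%nat.
Proof. destruct j; simpl; lia. Qed.
Lemma nn_S j : (nn j <= nn (S j))%nat.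
Proof. simpl; lia. Qed.

Lemma bnd1 j : ainf - a (kk j) <= e j.
Proof. apply Kf_spec, kk_ge. Qed.
Lemma bnd2 j n : (n >= nn j)%nat -> d (kk j) n <= a (kk j) + e j.
Proof. intros H. apply Nf_spec. assert (Hn := nn_ge j). lia. Qed.

Definition T j := D (kk j) (nn j).

Lemma T_SV j : SV V (T j).
Proof. apply D_SV. Qed.

Lemma T_diff j : mu V v (fun x => T (S j) x /\ ~ T j x) + mu V v (fun x => T j x /\ ~ T (S j) x) <= 3 * (/4) ^ (S j).
Proof.
  set (k := kk j). set (k' := kk (S j)). set (n := nn j). set (n' := nn (S j)).
  assert (Hk : (k <= k')%nat) by (unfold k, k'; assert (H := kk_S j); lia).
  assert (Hn : (n <= n')%nat) by apply nn_S.
  assert (E1 : mu V v (fun x => T j x /\ ~ T (S j) x) <= d k n - d k n').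
  { unfold d. rewrite <- (mu_diff V v Hms); try apply D_SV.
    - apply (mu_mono V v Hms); try (apply SV_diff; auto; apply D_SV).
      intros x [H1 H2]. split; auto. intros H3. apply H2. unfold T. eapply D_inc; eauto.
    - intros x; apply D_dec; auto. }
  assert (E2 : mu V v (fun x => T (S j) x /\ ~ T j x) <= d k' n' - d k n').
  { unfold d. rewrite <- (mu_diff V v Hms); try apply D_SV.
    - apply (mu_mono V v Hms); try (apply SV_diff; auto; apply D_SV).
      intros x [H1 H2]. split; auto. intros H3. apply H2. unfold T. eapply D_dec; eauto.
    - intros x; apply D_inc; auto. }
  assert (B1 := bnd2 j n (le_n _)). assert (B2 := bnd2 (S j) n' (le_n _)).
  assert (B3 := bnd1 j). assert (A1 := a_le k n'). assert (A2 := a_le_inf k').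
  fold k in B1, B3. fold k' in B2.
  unfold e in *. simpl pow in *. assert (0 < (/4) ^ j) by (apply pow_lt; lra). simpl. lra.
Qed.

Definition Bc x := exists m, forall i, C m i x.

Definition Gj j := fun x => exists n, D (kk j) (nn j + n) x /\ ~ D (kk j) (nn j + S n) x.

Lemma Gj_cov j : cov V v (Gj j) (e j).
Proof.
  set (k := kk j).
  apply (cov_union V v Hms _ (fun n => d k (nn j + n) - d k (nn j + S n))).
  - intros n. apply (cov_mono V v (fun x => D k (nn j + n) x /\ ~ D k (nn j + S n) x) _
       (mu V v (fun x => D k (nn j + n) x /\ ~ D k (nn j + S n) x))).
    + apply (cov_SV V v Hms). apply SV_diff; auto; apply D_SV.
    + intros x Hx; exact Hx.
    + unfold d. rewrite (mu_diff V v Hms); try apply D_SV; [lra|]. intros x; apply D_dec; lia.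
  - intros K. rewrite (telescope (fun n => d k (nn j + n))).
    rewrite Nat.add_0_r. assert (H1 := bnd2 j (nn j) (le_n _)). assert (H2 := a_le k (nn j + S K)).
    fold k in H1. lra.
Qed.

Lemma G_in_Gj x j : ~ Bc x -> T j x -> Gj j x.
Proof.
  intros HB HT. unfold Bc in HB.
  assert (H : forall m, ~ forall i, C m i x) by (intros m Hm; apply HB; eauto).
  destruct (D_out x H (kk j)) as [n0 Hn0].
  apply NNPP. intros HG. apply Hn0.
  assert (Hall : forall n, D (kk j) (nn j + n) x).
  { induction n. - rewrite Nat.add_0_r; exact HT.
    - apply NNPP. intros Hn. apply HG. exists n; auto. }
  eapply D_dec; [|apply (Hall n0)]. lia.
Qed.

Definition G x := ~ Bc x /\ forall J, exists j, (j >= J)%nat /\ T j x.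

Lemma G_null : null_set V v G.
Proof.
  apply (null_of_cov V v Hms). intros eps He.
  destruct (pow_lt_1_zero (/4) ltac:(rewrite Rabs_right; lra) (eps * 3 / 4) ltac:(lra)) as [J HJ].
  specialize (HJ (S J) ltac:(lia)). rewrite Rabs_right in HJ by (apply Rle_ge, pow_le; lra).
  exists ((/4) ^ (S J) * (4/3)). split; [lra|].
  eapply cov_mono; [apply (cov_union V v Hms (fun i => Gj (J + i)) (fun i => e (J + i)))| |].
  - intros i; apply Gj_cov.
  - intros K. unfold e. apply geom_bound.
  - intros x [HB Hx]. destruct (Hx J) as [j [Hj HT]]. exists (j - J)%nat.
    replace (J + (j - J))%nat with j by lia. apply G_in_Gj; auto.
  - lra.
Qed.

Lemma T_cv x : ~ G x -> Un_cv (fun j => indic (T j) x) (indic Bc x).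
Proof.
  intros HG. apply Un_cv_event. destruct (classic (Bc x)) as [HB|HB].
  - destruct HB as [m Hm]. exists m. intros j Hj. rewrite !(indic_in _ x); auto.
    + exists m; auto.
    + unfold T. apply (D_inc m); [assert (H := kk_j j); lia|]. apply (D_P m m); auto. apply P_all; auto.
  - assert (H : ~ forall J, exists j, (j >= J)%nat /\ T j x) by (intros H; apply HG; split; auto).
    apply not_all_ex_not in H. destruct H as [J HJ]. exists J. intros j Hj.
    rewrite !(indic_out _ x); auto. intros HT. apply HJ. eauto.
Qed.

Lemma Bc_Vc : Vc V v Bc.
Proof.
  apply (approx_L1 V v Hms HX T (indic Bc) 3 G); auto.
  - apply T_SV.
  - lra.
  - apply T_diff.
  - apply G_null.
  - apply T_cv.
Qed.

End P6.

Lemma indic_ext {X : Type} (A B : set X) : (forall x, A x <-> B x) -> forall x, indic A x = indic B x.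
Proof. intros E x. unfold indic. repeat destruct (excluded_middle_informative _); auto; exfalso; firstorder. Qed.

Lemma ds_Vc {X : Type} (V : set (set X)) v : measure_space V v -> V fullset ->
  forall B, sigma_of (delta_of (SV V)) B -> Vc V v B.
Proof.
  intros Hms HX B [Bn [HBn EB]].
  set (C := fun m => proj1_sig (constructive_indefinite_description _ (HBn m))).
  assert (HC : forall m, (forall n, SV V (C m n)) /\ (forall x, Bn m x <-> forall n, C m n x)).
  { intros m. unfold C. destruct (constructive_indefinite_description _ _); auto. }
  destruct (Bc_Vc V v Hms HX C (fun m n => proj1 (HC m) n)) as [s [N [H1 [H2 H3]]]].
  exists s, N. repeat split; auto. intros x Hx. rewrite (indic_ext B (Bc C)); auto.
  intros y. rewrite EB. unfold Bc. split; intros [m Hm]; exists m; apply (proj2 (HC m) y); auto.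
Qed.

Lemma indic_pt {X : Type} (A B : set X) x : (A x <-> B x) -> indic A x = indic B x.
Proof. intros E. unfold indic. repeat destruct (excluded_middle_informative _); auto; exfalso; tauto. Qed.

Theorem mainTheorem10 (X : Type) (V : set (set X)) (v : set X -> R)
  (Hms : measure_space V v) (HX : V fullset) (A : set X) :
  (Vc V v A <->
     exists B D, sigma_of (delta_of (SV V)) B /\ null_set V v D /\
                 (forall x, A x <-> symdiff B D x)) /\
  (Vc V v A <->
     exists B D, delta_of (sigma_of V) B /\ null_set V v D /\
                 (forall x, A x <-> symdiff B D x)).
Proof.
  split; split.
  - apply Vc_to_b; auto.
  - intros [B [D [HB [HD E]]]].
    apply (L1_nullmod V v Hms (indic B) (indic A) D); auto.
    + apply ds_Vc; auto.
    + intros x Hx. apply indic_pt. rewrite E. unfold symdiff. tauto.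
  - intros HA. apply L1_compl in HA; auto.
    destruct (Vc_to_b V v Hms HX _ HA) as [B [D [HB [HD E]]]].
    exists (fun x => ~ B x), D. split; [|split; auto].
    + apply (compl_ds V v Hms); auto.
    + intros x. specialize (E x). unfold symdiff in *. destruct (classic (A x)), (classic (B x)), (classic (D x)); tauto.
  - intros [B [D [HB [HD E]]]].
    assert (H1 : Vc V v (fun x => ~ ~ B x)).
    { apply L1_compl; auto. apply ds_Vc; auto. apply (compl_sd V v Hms); auto. }
    apply (L1_nullmod V v Hms _ (indic A) D H1); auto.
    intros x Hx. apply indic_pt. rewrite E. unfold symdiff. destruct (classic (B x)); tauto.
Qed.
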